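(* For every integer $k\ge 2$, there exists a connected twin-free graph $G$ with $n=2^{k-1}+k-2$ vertices for which $i_{\max}(G)=k$.
   Context: $i_{\max}(G)$ denotes the number of maximal independent sets of $G$. A graph is twin-free if no two vertices have the same open neighbourhood. *)

(* Defs.v *)
From mathcomp Require Import all_boot.
Set Implicit Arguments. Unset Strict Implicit. Unset Printing Implicit Defensive.

Section Graphs.
Variable T : finType.

Definition simple_graph (e : rel T) : Prop := symmetric e /\ irreflexive e.

Definition connected_graph (e : rel T) : Prop := forall x y : T, connect e x y.

Definition open_nbhd (e : rel T) (x : T) : {set T} := [set y | e x y].

Definition twin_free (e : rel T) : Prop :=
  forall x y : T, open_nbhd e x = open_nbhd e y -> x = y.

Definition independent (e : rel T) (A : {set T}) : bool :=
  [forall x in A, forall y in A, ~~ e x y].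

Definition maximal_independent (e : rel T) (A : {set T}) : bool :=
  independent e A && [forall x, (x \notin A) ==> ~~ independent e (x |: A)].

Definition imax (e : rel T) : nat := #|[set A : {set T} | maximal_independent e A]|.
End Graphs.

(* Main.v *)
Require Import Defs.
From mathcomp Require Import all_boot.
From mathcomp Require Import zify.
Set Implicit Arguments. Unset Strict Implicit. Unset Printing Implicit Defensive.

Lemma indP (T : finType) (e : rel T) (A : {set T}) :
  reflect {in A &, forall x y, ~~ e x y} (independent e A).
Proof.
apply: (iffP forall_inP) => [H x y xA yA | H x xA].
  by have /forall_inP := H x xA; apply.
by apply/forall_inP => y yA; exact: H.
Qed.

Lemma maxP (T : finType) (e : rel T) (A : {set T}) :
  reflect (independent e A /\ forall x, x \notin A -> ~~ independent e (x |: A))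
          (maximal_independent e A).
Proof.
apply: (iffP andP) => [[H1 /forallP H2]|[H1 H2]]; split => //.
  by move=> x; apply/implyP.
by apply/forallP => x; apply/implyP; apply: H2.
Qed.

Lemma maxind_eq (T : finType) (e : rel T) (A B : {set T}) :
  maximal_independent e A -> independent e B -> A \subset B -> A = B.
Proof.
move=> /maxP[_ HA] /indP HB sAB; apply/eqP; rewrite eqEsubset sAB /=.
apply/subsetP => x xB; apply/negPn/negP => xA.
have /indP := HA x xA; apply => y z; rewrite !inE => /orP[/eqP->|/(subsetP sAB) yB]
  /orP[/eqP->|/(subsetP sAB) zB]; exact: HB.
Qed.

Lemma notind (T : finType) (e : rel T) (A : {set T}) x y :
  x \in A -> y \in A -> e x y -> ~~ independent e A.
Proof. by move=> xA yA exy; apply/indP => H; have := H x y xA yA; rewrite exy. Qed.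

Section Transfer.
Variables (U W : finType) (e : rel W) (h : U -> W) (g : W -> U).
Hypotheses (hK : cancel h g) (gK : cancel g h).
Let e' : rel U := fun x y => e (h x) (h y).

Lemma tr_simple : simple_graph e -> simple_graph e'.
Proof. by case=> s i; split => [x y|x]; [exact: s | exact: i]. Qed.

Lemma tr_connect a b : connect e a b -> connect e' (g a) (g b).
Proof.
case/connectP => p; elim: p a => [|c p IH] a /=; first by move=> _ ->.
case/andP => eac pc lc; apply: connect_trans (IH c pc lc).
by apply: connect1; rewrite /e' !gK.
Qed.

Lemma tr_connected : connected_graph e -> connected_graph e'.
Proof. by move=> H x y; rewrite -(hK x) -(hK y); apply: tr_connect. Qed.

Lemma tr_twin : twin_free e -> twin_free e'.
Proof.
move=> H x y Hxy; apply: (can_inj hK); apply: H; apply/setP => v.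
move/setP: Hxy => /(_ (g v)); by rewrite !inE /e' gK.
Qed.

Lemma tr_ind A : independent e' A = independent e (h @: A).
Proof.
apply/indP/indP => H.
  by move=> _ _ /imsetP[x xA ->] /imsetP[y yA ->]; exact: H.
by move=> x y xA yA; apply: H; apply: imset_f.
Qed.

Lemma tr_max A : maximal_independent e' A = maximal_independent e (h @: A).
Proof.
apply/maxP/maxP => [[H1 H2]|[H1 H2]]; split; [by rewrite -tr_ind| |by rewrite tr_ind|].
  move=> v vA; rewrite -(gK v) -imsetU1 -tr_ind; apply: H2.
  by apply: contra vA => gA; rewrite -(gK v); apply: imset_f.
move=> x xA; rewrite tr_ind imsetU1; apply: H2.
by apply/imsetP => [[y yA /(can_inj hK) E]]; rewrite E yA in xA.
Qed.

Lemma tr_imax : imax e' = imax e.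
Proof.
rewrite /imax.
have -> : [set B | maximal_independent e B] =
          (fun A : {set U} => h @: A) @: [set A | maximal_independent e' A].
  apply/setP => B; rewrite inE; apply/idP/imsetP => [mB|[A]]; last first.
    by rewrite inE tr_max => ? ->.
  exists (g @: B); last first.
    by rewrite -imset_comp (eq_imset _ gK) imset_id.
  by rewrite inE tr_max -imset_comp (eq_imset _ gK) imset_id.
by rewrite card_imset //; apply: imset_inj; apply: can_inj hK.
Qed.
End Transfer.

Section Constr.
Variable m : nat.
Notation n := m.+1.

Notation PS := {S : {set 'I_n} | S != setT}.
Notation V := (PS + 'I_n)%type.

Definition E (x y : V) : bool :=
  match x, y with
  | inl _, inl _ => false
  | inl X, inr i => i \notin val X
  | inr i, inl X => i \notin val X
  | inr i, inr j => i != j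
  end.

Lemma set0_neqT : (set0 : {set 'I_n}) != setT.
Proof. by apply/eqP => H; have := in_setT (ord0 : 'I_n); rewrite -H inE. Qed.

Definition s0 : PS := exist _ set0 set0_neqT.

Lemma E_simple : simple_graph E.
Proof. by split => [[S|i] [T|j]|[S|i]] //=; rewrite ?eqxx // eq_sym. Qed.

Lemma PS_out (S : PS) : exists i, i \notin val S.
Proof.
case: (pickP [pred i | i \notin val S]) => [i Hi|H]; first by exists i.
case: S H => S /= HS H; exfalso; move/negP: HS; apply; apply/eqP/setP => i.
by have := H i; rewrite !inE /=; case: (i \in S).
Qed.

Lemma E_connected : connected_graph E.
Proof.
have hub v : connect E v (inl s0).
  case: v => [S|i]; last by apply: connect1; rewrite /= inE.
  case: (PS_out S) => i Hi; apply: (connect_trans (y := inr i)).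
    by apply: connect1.
  by apply: connect1; rewrite /= inE.
move=> x y; apply: connect_trans (hub x) _.
by rewrite (sym_connect_sym (proj1 E_simple)); apply: hub.
Qed.

Lemma E_twin : twin_free E.
Proof.
move=> x y H.
have Hm z : E x z = E y z by move/setP: H => /(_ z); rewrite !inE.
case: x y H Hm => [S|i] [T|j] _ Hm.
- congr inl; apply: val_inj; apply/setP => i.
  by have := Hm (inr i); rewrite /= => /(congr1 negb); rewrite !negbK.
- by have := Hm (inl s0); rewrite /= inE.
- by have := Hm (inl s0); rewrite /= inE.
- by have := Hm (inr j); rewrite /= eqxx => /negbFE/eqP ->.
Qed.

Definition F (o : option 'I_n) : {set V} :=
  match o with
  | None => [set x : V | if x is inl _ then true else false]
  | Some i => [set x : V | match x with inl X => i \in val X | inr j => j == i end]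
  end.

Lemma F_ind o : independent E (F o).
Proof.
apply/indP => x y; case: o => [i|]; rewrite !inE; case: x => [S|j]; case: y => [T|l] //=.
- by move=> iS /eqP ->; rewrite iS.
- by move=> /eqP -> iT; rewrite iT.
- by move=> /eqP -> /eqP ->; rewrite eqxx.
Qed.

Lemma F_max o : maximal_independent E (F o).
Proof.
apply/maxP; split; first exact: F_ind.
case: o => [i|] x; rewrite inE.
- case: x => [S|j] Hx.
    apply: (notind (x := inl S) (y := inr i)); by rewrite ?inE ?eqxx /= ?inE ?eqxx ?orbT.
  apply: (notind (x := inr j) (y := inr i)); by rewrite ?inE ?eqxx /= ?inE ?eqxx ?orbT.
- case: x => [S|j] // _.
  apply: (notind (x := inr j) (y := inl s0)); by rewrite ?inE ?eqxx /= ?inE ?eqxx ?orbT.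
Qed.

Lemma MIS_F A : maximal_independent E A -> exists o, A = F o.
Proof.
move=> mA; have iA : independent E A by case/andP: mA.
move/indP: (iA) => Hi.
case: (pickP [pred x in A | if x is inr _ then true else false]) => [x|H].
  case: x => [S|i] /=; rewrite ?andbF // andbT => iA'.
  exists (Some i); apply: maxind_eq mA (F_ind _) _.
  apply/subsetP => y yA; rewrite inE; case: y yA => [T|j] yA.
    by have := Hi _ _ iA' yA; rewrite /= negbK.
  by have := Hi _ _ iA' yA; rewrite /= negbK eq_sym.
exists None; apply: maxind_eq mA (F_ind _) _.
apply/subsetP => y yA; rewrite inE; case: y yA => [T|j] // yA.
by have := H (inr j); rewrite /= yA.
Qed.

Lemma F_inj : injective F.
Proof.
move=> [i|] [j|] H.
- by move/setP: H => /(_ (inr i)); rewrite !inE eqxx => /esym/eqP ->.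
- by move/setP: H => /(_ (inr i)); rewrite !inE eqxx.
- by move/setP: H => /(_ (inr j)); rewrite !inE eqxx.
- by [].
Qed.

Lemma E_imax : imax E = m.+2.
Proof.
rewrite /imax.
have -> : [set A | maximal_independent E A] = F @: setT.
  apply/setP => A; rewrite inE; apply/idP/imsetP => [/MIS_F[o ->]|[o _ ->]].
    by exists o.
  exact: F_max.
by rewrite card_imset ?cardsT ?card_option ?card_ord //; apply: F_inj.
Qed.

Lemma card_V : #|{: V}| = 2 ^ n + m.
Proof.
rewrite card_sum card_sig card_ord.
have -> : #|[pred x : {set 'I_n} | x != setT]| = #|{set 'I_n}|.-1.
  by rewrite -(cardC1 (setT : {set 'I_n})); apply: eq_card => x.
rewrite -cardsT -powersetT card_powerset cardsT card_ord.
have : 0 < 2 ^ n by rewrite expn_gt0.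
lia.
Qed.

End Constr.

Theorem proposition2p1 (k : nat) (hk : 2 <= k) :
  exists e : rel 'I_(2 ^ (k - 1) + k - 2),
    [/\ simple_graph e, connected_graph e, twin_free e & imax e = k].
Proof.
case: k hk => [|[|m]] // _.
have cV : #|{: ({S : {set 'I_m.+1} | S != setT} + 'I_m.+1)%type}| = 2 ^ (m.+2 - 1) + m.+2 - 2.
  rewrite card_V; have -> : m.+2 - 1 = m.+1 by rewrite subSS subn0.
  lia.
pose h := fun x : 'I_(2 ^ (m.+2 - 1) + m.+2 - 2) => enum_val (cast_ord (esym cV) x).
pose g := fun v : ({S : {set 'I_m.+1} | S != setT} + 'I_m.+1)%type => cast_ord cV (enum_rank v).
have hK : cancel h g by move=> x; rewrite /g /h enum_valK cast_ordKV.
have gK : cancel g h by move=> v; rewrite /g /h cast_ordK enum_rankK.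
exists (fun x y => E (h x) (h y)); split.
- exact: tr_simple (@E_simple m).
- exact: tr_connected gK (@E_connected m).
- exact: tr_twin hK gK (@E_twin m).
- by rewrite (tr_imax _ hK gK) E_imax.
Qed.
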